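(* Let $a$ and $b$ be Laurent polynomials with symmetry and let $r:=\gcd(a,b)$. Then there exist Laurent polynomials $u$ and $v$ with symmetry such that $$a(z)u(z)+b(z)v(z)=r(z).$$ Moreover, $\mathrm{S}a(z)\,\mathrm{S}u(z)=\mathrm{S}b(z)\,\mathrm{S}v(z)=\mathrm{S}r(z)$ and $\gcd(u,v)=1$.
   Context: Laurent polynomials $u(z)=\sum_ku(k)z^k$ with finitely many nonzero complex coefficients; gcd is taken in the ring of Laurent polynomials (up to nonzero scalar monomial multiples). $u$ has symmetry of type $\epsilon z^c$ ($\epsilon\in\{\pm1\},c\in\mathbb Z$) if $u(z)=\epsilon z^cu(z^{-1})$; for nonzero $u$, $\mathrm{S}u(z):=u(z)/u(z^{-1})$; the zero polynomial has symmetry of every type. *)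

(* Defs.v *)
(* Laurent polynomials are represented by pairs
   (p, n) with p : {poly R[i]}, n : int, standing for z^n p(z); their values
   live in the field of rational functions {fraction {poly R[i]}}, which
   contains the ring of Laurent polynomials.  Ring operations and equality of
   Laurent polynomials (and of the rational functions S u) are those of this
   field. *)
From HB Require Import structures.
From mathcomp Require Import all_boot all_algebra fraction.
From mathcomp Require Import reals.
From mathcomp.real_closed Require Import complex.

Set Implicit Arguments.
Unset Strict Implicit.
Unset Printing Implicit Defensive.

Import GRing.Theory Num.Theory.
Local Open Scope ring_scope.

Notation tofrac := (@FracField.tofrac _).

Definition ratfun (R : realType) := {fraction {poly R[i]}}.

Definition zvar (R : realType) : ratfun R := tofrac ('X : {poly R[i]}).

Record laurent (R : realType) := Laurent { lpoly : {poly R[i]}; lshift : int }.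

Definition lval (R : realType) (u : laurent R) : ratfun R :=
  tofrac (lpoly u) * zvar R ^ lshift u.

Definition lval_inv (R : realType) (u : laurent R) : ratfun R :=
  \sum_(i < size (lpoly u))
     tofrac ((lpoly u)`_i)%:P * zvar R ^ (- (i%:Z + lshift u)).

Definition lone (R : realType) : laurent R := Laurent 1 0.

Definition lsym_type (R : realType) (u : laurent R) (eps : R[i]) (c : int) :=
  lval u = tofrac eps%:P * zvar R ^ c * lval_inv u.

Definition lsym (R : realType) (u : laurent R) :=
  exists (eps : R[i]) (c : int), (eps = 1 \/ eps = -1) /\ lsym_type u eps c.

(* S u (z) = u(z) / u(z^{-1}) (only meaningful for nonzero u) *)
Definition Sym (R : realType) (u : laurent R) : ratfun R :=
  lval u / lval_inv u.

Definition ldvd (R : realType) (d a : laurent R) :=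
  exists q : laurent R, lval d * lval q = lval a.

(* r is a gcd of a and b in the ring of Laurent polynomials
   (gcd is defined up to unit = nonzero scalar monomial multiples) *)
Definition is_lgcd (R : realType) (r a b : laurent R) :=
  [/\ ldvd r a, ldvd r b & forall d, ldvd d a -> ldvd d b -> ldvd d r].

(* Main.v *)
Require Import Defs.
From HB Require Import structures.
From mathcomp Require Import all_boot all_algebra fraction.
From mathcomp Require Import reals.
From mathcomp.real_closed Require Import complex.
From mathcomp Require Import ring zify.
Import GRing.Theory Num.Theory.
Local Open Scope ring_scope.

Definition E {R : realType} : R[i] -> ratfun R :=
  (@FracField.tofrac {poly R[i]}) \o polyC.
Definition Pi {R : realType} (p : {poly R[i]}) : ratfun R :=
  (map_poly E p).[(zvar R)^-1].

Lemma zvar_neq0 (R : realType) : zvar R != 0.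
Proof. by rewrite /zvar tofrac_eq0 polyX_eq0. Qed.

Lemma zexp_neq0 (R : realType) (k : int) : zvar R ^ k != 0.
Proof. by rewrite expfz_neq0 // zvar_neq0. Qed.

Lemma zexpD (R : realType) (m n : int) : zvar R ^ (m + n) = zvar R ^ m * zvar R ^ n.
Proof. by rewrite expfzDr // zvar_neq0. Qed.

Lemma zexpN (R : realType) (n : int) : zvar R ^ (- n) = (zvar R ^ n)^-1.
Proof. by rewrite invr_expz. Qed.

Lemma zK (R : realType) (n : int) : zvar R ^ n * zvar R ^ (- n) = 1.
Proof. by rewrite -zexpD subrr expr0z. Qed.

Lemma tofracXn (R : realType) (k : nat) : tofrac ('X^k : {poly R[i]}) = zvar R ^ (k%:Z).
Proof. by rewrite rmorphXn. Qed.

Lemma PiM (R : realType) (p q : {poly R[i]}) : Pi (p * q) = Pi p * Pi q.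
Proof. by rewrite /Pi rmorphM hornerM. Qed.
Lemma PiD (R : realType) (p q : {poly R[i]}) : Pi (p + q) = Pi p + Pi q.
Proof. by rewrite /Pi rmorphD hornerD. Qed.
Lemma PiN (R : realType) (p : {poly R[i]}) : Pi (- p) = - Pi p.
Proof. by rewrite /Pi rmorphN hornerN. Qed.
Lemma PiC (R : realType) (c : R[i]) : Pi c%:P = E c.
Proof. by rewrite /Pi map_polyC hornerC. Qed.
Lemma PiXn (R : realType) (k : nat) : Pi ('X^k : {poly R[i]}) = zvar R ^ (- k%:Z).
Proof. by rewrite /Pi rmorphXn /= map_polyX hornerXn exprVn exprnN. Qed.

Lemma lval_invE (R : realType) (u : laurent R) :
  lval_inv u = Pi (lpoly u) * zvar R ^ (- Defs.lshift u).
Proof.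
rewrite /lval_inv /Pi horner_coef size_map_poly.
rewrite mulr_suml; apply: eq_bigr => i _.
rewrite coef_map -mulrA; congr (_ * _).
by rewrite exprVn exprnN -zexpD opprD.
Qed.

Lemma lvalE (R : realType) (u : laurent R) :
  lval u = tofrac (lpoly u) * zvar R ^ (Defs.lshift u).
Proof. by []. Qed.

Notation lsh := Defs.lshift.

Definition lmul {R : realType} (u v : laurent R) : laurent R :=
  Laurent (lpoly u * lpoly v) (lsh u + lsh v).
Definition lconst {R : realType} (c : R[i]) : laurent R := Laurent c%:P 0.
Definition lmon {R : realType} (k : int) : laurent R := Laurent 1 k.
Definition lopp {R : realType} (u : laurent R) : laurent R := Laurent (- lpoly u) (lsh u).
Definition ladd {R : realType} (u v : laurent R) : laurent R :=
  let N := (absz (lsh u) + absz (lsh v))%N in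
  Laurent (lpoly u * 'X^(absz (lsh u + N%:Z)) + lpoly v * 'X^(absz (lsh v + N%:Z)))
          (- N%:Z).
Definition lrev {R : realType} (u : laurent R) : laurent R :=
  Laurent (\poly_(i < size (lpoly u)) (lpoly u)`_((size (lpoly u)).-1 - i))
          (- lsh u - ((size (lpoly u)).-1)%:Z).

Lemma lval_lmul (R : realType) (u v : laurent R) :
  lval (lmul u v) = lval u * lval v.
Proof. by rewrite !lvalE /= tofracM zexpD mulrACA. Qed.
Lemma lvali_lmul (R : realType) (u v : laurent R) :
  lval_inv (lmul u v) = lval_inv u * lval_inv v.
Proof. by rewrite !lval_invE /= PiM opprD zexpD mulrACA. Qed.
Lemma lval_lconst (R : realType) (c : R[i]) : lval (lconst c : laurent R) = E c.
Proof. by rewrite lvalE /= expr0z mulr1. Qed.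
Lemma lvali_lconst (R : realType) (c : R[i]) : lval_inv (lconst c : laurent R) = E c.
Proof. by rewrite lval_invE /= PiC oppr0 expr0z mulr1. Qed.
Lemma lval_lmon (R : realType) (k : int) : lval (lmon k : laurent R) = zvar R ^ k.
Proof. by rewrite lvalE /= rmorph1 mul1r. Qed.
Lemma lvali_lmon (R : realType) (k : int) : lval_inv (lmon k : laurent R) = zvar R ^ (- k).
Proof. by rewrite lval_invE /= -(expr0 'X) PiXn oppr0 expr0z mul1r. Qed.
Lemma lval_lopp (R : realType) (u : laurent R) : lval (lopp u) = - lval u.
Proof. by rewrite !lvalE /= rmorphN mulNr. Qed.
Lemma lvali_lopp (R : realType) (u : laurent R) : lval_inv (lopp u) = - lval_inv u.
Proof. by rewrite !lval_invE /= PiN mulNr. Qed.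

Lemma shift_val (R : realType) (p : {poly R[i]}) (n N : int) : 0 <= n + N ->
  tofrac (p * 'X^(absz (n + N))) * zvar R ^ (- N) = tofrac p * zvar R ^ n.
Proof.
move=> h; rewrite tofracM tofracXn gez0_abs // -mulrA -zexpD addrK //.
Qed.
Lemma shift_inv (R : realType) (p : {poly R[i]}) (n N : int) : 0 <= n + N ->
  Pi (p * 'X^(absz (n + N))) * zvar R ^ N = Pi p * zvar R ^ (- n).
Proof.
move=> h; rewrite PiM PiXn gez0_abs // -mulrA -zexpD opprD subrK //.
Qed.

Lemma shift_ok (n m : int) : 0 <= n + ((absz n + absz m)%N)%:Z.
Proof. lia. Qed.
Lemma shift_ok' (n m : int) : 0 <= m + ((absz n + absz m)%N)%:Z.
Proof. lia. Qed.

Lemma lval_ladd (R : realType) (u v : laurent R) :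
  lval (ladd u v) = lval u + lval v.
Proof.
by rewrite !lvalE /= tofracD mulrDl !shift_val ?shift_ok ?shift_ok'.
Qed.
Lemma lvali_ladd (R : realType) (u v : laurent R) :
  lval_inv (ladd u v) = lval_inv u + lval_inv v.
Proof.
by rewrite !lval_invE /= opprK PiD mulrDl !shift_inv ?shift_ok ?shift_ok'.
Qed.

Lemma lval_wd (R : realType) (u v : laurent R) :
  lval u = lval v -> lval_inv u = lval_inv v.
Proof.
rewrite !lvalE !lval_invE.
set N := ((absz (lsh u) + absz (lsh v))%N)%:Z.
rewrite -(shift_val _ _ _ _ (shift_ok (lsh u) (lsh v))) -(shift_val _ _ _ _ (shift_ok' (lsh u) (lsh v))).
rewrite -(shift_inv _ _ _ _ (shift_ok (lsh u) (lsh v))) -(shift_inv _ _ _ _ (shift_ok' (lsh u) (lsh v))).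
by move=> /(mulIf (zexp_neq0 _ _)) /eqP; rewrite tofrac_eq => /eqP ->.
Qed.

Lemma tofrac_poly (R : realType) (n : nat) (f : nat -> R[i]) :
  tofrac (\poly_(i < n) f i) = \sum_(i < n) E (f i) * zvar R ^ (i%:Z).
Proof.
rewrite poly_def rmorph_sum; apply: eq_bigr => i _.
by rewrite -mul_polyC rmorphM rmorphXn.
Qed.
Lemma Pi_poly (R : realType) (n : nat) (f : nat -> R[i]) :
  Pi (\poly_(i < n) f i) = \sum_(i < n) E (f i) * zvar R ^ (- i%:Z).
Proof.
rewrite poly_def /Pi rmorph_sum horner_sum; apply: eq_bigr => i _.
by rewrite -mul_polyC -/(Pi _) PiM PiC PiXn.
Qed.

Lemma rev_sum1 (R : realType) (n : nat) (f : nat -> R[i]) :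
  tofrac (\poly_(i < n) f (n.-1 - i)%N) =
  (\sum_(i < n) E (f i) * zvar R ^ (- i%:Z)) * zvar R ^ (n.-1%:Z).
Proof.
rewrite tofrac_poly mulr_suml (reindex_inj rev_ord_inj) /=.
apply: eq_bigr => i _; case: n i => [[]//|d] i /=.
have hi : (i <= d)%N by rewrite -ltnS.
rewrite subSS subKn // -mulrA -zexpD; congr (_ * _); congr (_ ^ _).
rewrite -subzn //; lia.
Qed.
Lemma rev_sum2 (R : realType) (n : nat) (f : nat -> R[i]) :
  Pi (\poly_(i < n) f (n.-1 - i)%N) =
  (\sum_(i < n) E (f i) * zvar R ^ (i%:Z)) * zvar R ^ (- n.-1%:Z).
Proof.
rewrite Pi_poly mulr_suml (reindex_inj rev_ord_inj) /=.
apply: eq_bigr => i _; case: n i => [[]//|d] i /=.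
have hi : (i <= d)%N by rewrite -ltnS.
rewrite subSS subKn // -mulrA -zexpD; congr (_ * _); congr (_ ^ _).
rewrite -subzn //; lia.
Qed.

Lemma lval_lrev (R : realType) (u : laurent R) : lval (lrev u) = lval_inv u.
Proof.
rewrite lvalE lval_invE /lrev /=.
rewrite (rev_sum1 R (size (lpoly u)) (fun i => (lpoly u)`_i)).
rewrite -[in RHS](coefK (lpoly u)) Pi_poly -mulrA -zexpD; congr (_ * _ ^ _).
set d := ((size _).-1)%:Z. ring.
Qed.
Lemma lvali_lrev (R : realType) (u : laurent R) : lval_inv (lrev u) = lval u.
Proof.
rewrite lvalE lval_invE /lrev /=.
rewrite (rev_sum2 R (size (lpoly u)) (fun i => (lpoly u)`_i)).
rewrite -[in RHS](coefK (lpoly u)) tofrac_poly -mulrA -zexpD; congr (_ * _ ^ _).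
set d := ((size _).-1)%:Z. ring.
Qed.

Definition sign {R : realType} (e : R[i]) := e = 1 \/ e = -1.

Lemma Esign (R : realType) (e : R[i]) : sign e -> E e = 1 :> ratfun R \/ E e = -1 :> ratfun R.
Proof. by case=> ->; [left; exact: rmorph1 | right; exact: rmorphN1]. Qed.

Lemma signM (R : realType) (e f : R[i]) : sign e -> sign f -> sign (e * f).
Proof.
rewrite /sign; case=> ->; case=> ->; rewrite ?mul1r ?mulN1r ?opprK; by [left|right].
Qed.

Lemma EM (R : realType) (x y : R[i]) : E (x * y) = E x * E y :> ratfun R.
Proof. exact: rmorphM. Qed.

Lemma gen_sym_inv (F : fieldType) (s w x y : F) : (s = 1 \/ s = -1) -> w != 0 ->
  x = s * w * y -> y = s * w^-1 * x.
Proof. by move=> hs hw ->; case: hs => ->; field. Qed.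

Lemma sym_inv (R : realType) (x : laurent R) e c : lsym_type x e c -> sign e ->
  lval_inv x = E e * zvar R ^ (- c) * lval x.
Proof.
by rewrite zexpN => H /(Esign R) hs; apply: gen_sym_inv (zexp_neq0 _ _) H.
Qed.

Lemma sym_fwd (R : realType) (x : laurent R) e c :
  lval_inv x = E e * zvar R ^ (- c) * lval x -> sign e -> lsym_type x e c.
Proof.
rewrite /lsym_type zexpN => H /(Esign R) hs.
rewrite -[zvar R ^ c]invrK.
by apply: gen_sym_inv hs _ H; rewrite invr_eq0 zexp_neq0.
Qed.

Lemma Sym_val (R : realType) (x : laurent R) e c : lsym_type x e c -> sign e ->
  lval x != 0 -> Sym x = E e * zvar R ^ c.
Proof.
move=> H hs nx; have nxi : lval_inv x != 0.
  by apply: contraNneq nx => h; rewrite H h mulr0.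
by rewrite /Sym {1}H mulfK.
Qed.

Lemma dvdXn_mono (R : realType) (p : {poly R[i]}) (j : nat) : p %| 'X^j ->
  exists c k, c != 0 /\ p = c *: 'X^k.
Proof.
have -> : ('X^j : {poly R[i]}) = ('X - 0%:P)^+j by rewrite polyC0 subr0.
move/dvdp_exp_XsubCP => [k _ /eqpP [[c1 c2] /andP [h1 h2] /= h]].
exists (c2 / c1), k; split; first by rewrite mulf_eq0 negb_or h2 invr_eq0 h1.
move: h; rewrite polyC0 subr0 => h.
by rewrite mulrC -scalerA -h scalerA mulVf // scale1r.
Qed.

Lemma unit_mono (R : realType) (x y : laurent R) : lval x * lval y = 1 ->
  exists c k, c != 0 /\ lval x = E c * zvar R ^ k.
Proof.
rewrite !lvalE mulrACA -tofracM -zexpD.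
set m := lsh x + lsh y => H.
have [j hj] : exists j, lpoly x %| 'X^j.
  case: (lerP m 0) => hm.
    exists (absz m); apply/dvdpP; exists (lpoly y); rewrite [_ * lpoly x]mulrC.
    apply/eqP; rewrite eq_sym -tofrac_eq tofracXn.
    have -> : ((absz m)%:Z) = - m by lia.
    by rewrite -invr_expz -[X in _ == X]mul1r -H mulfK // zexp_neq0.
  exists 0%N; apply/dvdpP; exists (lpoly y * 'X^(absz m)).
  rewrite expr0 [_ * lpoly x]mulrC mulrA; apply/eqP; rewrite eq_sym -tofrac_eq tofrac1 tofracM tofracXn.
  have -> : ((absz m)%:Z) = m by lia.
  by rewrite H.
have [c [k [hc hp]]] := dvdXn_mono R (lpoly x) j hj.
exists c, (k%:Z + lsh x); split => //.
by rewrite hp -mul_polyC tofracM tofracXn zexpD mulrA.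
Qed.

Definition gsign {F : ringType} (s : F) := s = 1 \/ s = -1.

Lemma G_inv (F : fieldType) (s w x y : F) : gsign s -> w != 0 ->
  x = s * w * y -> y = s * w^-1 * x.
Proof. by move=> hs hw ->; case: hs => ->; field. Qed.

Lemma G_qsym (F : fieldType) (s t A B r X Xi Yi Ri Y : F) :
  gsign s -> gsign t -> A != 0 -> B != 0 -> r != 0 ->
  Ri = s * A^-1 * r -> Yi = t * B^-1 * Y -> r * X = Y -> Ri * Xi = Yi ->
  Xi = s * t * (A * B^-1) * X.
Proof.
move=> hs ht hA hB hr hRi hYi hY h.
have -> : Xi = (s * A * r^-1) * (Ri * Xi) by rewrite hRi; case: hs => ->; field; rewrite hA hr.
rewrite h hYi -hY; case: hs => ->; case: ht => ->; field; rewrite ?hA ?hB ?hr //.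
Qed.

Lemma G_u_sym (F : fieldType) (s A C h u0 u0i : F) : gsign s -> A != 0 -> C != 0 ->
  h * (u0i + s * (A * C^-1 * u0)) = s * (A * C^-1) * (h * (u0 + s * (C * A^-1 * u0i))).
Proof. move=> hs hA hC; case: hs => ->; field; rewrite ?hA ?hC //. Qed.

Lemma G_eq (F : fieldType) (ea eb er A B C h a ai b bi r ri u0 u0i v0 v0i : F) :
  gsign ea -> gsign eb -> gsign er -> A != 0 -> B != 0 -> C != 0 -> h + h = 1 ->
  a = ea * A * ai -> b = eb * B * bi -> r = er * C * ri ->
  a * u0 + b * v0 = r -> ai * u0i + bi * v0i = ri ->
  a * (h * (u0 + er * ea * (C * A^-1 * u0i))) + b * (h * (v0 + er * eb * (C * B^-1 * v0i))) = r.
Proof.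
move=> hea heb her hA hB hC hh ha hb hr e1 e2.
transitivity (h * (a * u0 + b * v0) + h * (er * C * (ai * u0i + bi * v0i))).
  rewrite ha hb; case: hea => ->; case: heb => ->; case: her => ->; field; rewrite ?hA ?hB //.
by rewrite e1 e2 -hr -mulrDl hh mul1r.
Qed.

Lemma G_t (F : fieldType) (e K M : F) : gsign e -> K != 0 -> M != 0 ->
  K^-1 + e * (M * K^-1)^-1 = e * M^-1 * (K + e * (M * K^-1)).
Proof. move=> he hK hM; case: he => ->; field; rewrite ?hK ?hM //. Qed.

Lemma G_fix_u (F : fieldType) (er ea eb A B C bq bqi Lm t ti : F) :
  gsign er -> gsign ea -> gsign eb -> A != 0 -> B != 0 -> C != 0 ->
  bqi = er * eb * (C * B^-1) * bq -> ti = ea * eb * (C * C * A^-1 * B^-1)^-1 * t ->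
  bqi * (Lm * ti) = er * ea * (A * C^-1) * (bq * (Lm * t)).
Proof.
move=> her hea heb hA hB hC -> ->.
case: her => ->; case: hea => ->; case: heb => ->; field; rewrite ?hA ?hB ?hC //.
Qed.

Lemma G_fix_v (F : fieldType) (er ea eb A B C v vi aq aqi Lm t ti : F) :
  gsign er -> gsign ea -> gsign eb -> A != 0 -> B != 0 -> C != 0 ->
  vi = er * eb * (B * C^-1) * v ->
  aqi = er * ea * (C * A^-1) * aq -> ti = ea * eb * (C * C * A^-1 * B^-1)^-1 * t ->
  vi + - (aqi * (Lm * ti)) = er * eb * (B * C^-1) * (v + - (aq * (Lm * t))).
Proof.
move=> her hea heb hA hB hC -> -> ->.
case: her => ->; case: hea => ->; case: heb => ->; field; rewrite ?hA ?hB ?hC //.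
Qed.

Lemma G_fix_eq (F : comRingType) (r aq bq v Lt a b : F) :
  a = r * aq -> b = r * bq -> b * v = r -> a * (bq * Lt) + b * (v + - (aq * Lt)) = r.
Proof.
move=> ha hb hv; transitivity (b * v); last exact: hv.
rewrite ha hb; ring.
Qed.

Lemma G_S (F : fieldType) (ea er A C : F) : gsign ea -> A != 0 ->
  ea * A * (er * ea * (C * A^-1)) = er * C.
Proof. move=> hea hA; case: hea => ->; field; rewrite ?hA //. Qed.

Lemma G_gcd (F : comRingType) (r d aq bq x y : F) :
  r * (d * (aq * x + bq * y)) = (r * aq) * (d * x) + (r * bq) * (d * y).
Proof. ring. Qed.

Lemma E1 (R : realType) : E 1 = 1 :> ratfun R.
Proof. exact: rmorph1. Qed.

Lemma Edef (R : realType) (e : R[i]) : tofrac e%:P = E e :> ratfun R.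
Proof. reflexivity. Qed.

Lemma dvd_rev (R : realType) (a r : laurent R) e c :
  lsym_type a e c -> ldvd r a -> ldvd (lrev r) a.
Proof.
rewrite /lsym_type Edef.
move=> Ha [q Hq].
have := lval_wd _ (lmul r q) a; rewrite lval_lmul lvali_lmul => /(_ Hq) Hi.
exists (lmul (lmul (lconst e) (lmon c)) (lrev q)).
by rewrite lval_lrev !lval_lmul lval_lconst lval_lmon lval_lrev Ha -Hi mulrCA.
Qed.

Lemma E_inj (R : realType) (x y : R[i]) : E x = E y :> ratfun R -> x = y.
Proof.
move=> h; apply: polyC_inj; apply/eqP; rewrite -tofrac_eq; apply/eqP; exact: h.
Qed.

Lemma lval_dvd_neq0 (R : realType) (r a : laurent R) :
  ldvd r a -> lval a != 0 -> lval r != 0.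
Proof.
move=> [q hq] na; apply/eqP => h; move: na; rewrite -hq h mul0r eqxx; exact: id.
Qed.

Lemma r_sym (R : realType) (a b r : laurent R) ea ca eb cb :
  lsym_type a ea ca -> lsym_type b eb cb -> is_lgcd r a b -> lval a != 0 ->
  exists er cr, sign er /\ lsym_type r er cr.
Proof.
move=> Ha Hb [hra hrb hg] na.
have nr := lval_dvd_neq0 _ _ _ hra na.
have [s Hs] := hg _ (dvd_rev _ _ _ _ _ Ha hra) (dvd_rev _ _ _ _ _ Hb hrb).
rewrite lval_lrev in Hs.
have := lval_wd _ (lmul (lrev r) s) r; rewrite lval_lmul lvali_lmul lval_lrev lvali_lrev.
move=> /(_ Hs) Hs2.
have h1 : lval (lrev s) * lval s = 1.
  apply: (mulfI nr); rewrite mulr1 lval_lrev mulrA Hs2 Hs; reflexivity.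
have [c [k [hc hk]]] := unit_mono _ _ _ h1.
have := lval_wd _ (lrev s) (lmul (lconst c) (lmon k)).
rewrite lval_lmul lval_lconst lval_lmon lvali_lmul lvali_lconst lvali_lmon lvali_lrev.
move=> /(_ hk) hk2.
have hcc : c ^+ 2 = 1.
  apply: (E_inj R); rewrite expr2 EM E1.
  move: h1; rewrite hk hk2 => <-.
  rewrite mulrACA -[X in _ = _ * X]zexpD subrr expr0z mulr1; reflexivity.
exists c, (- k); split.
  move/eqP: hcc; rewrite sqrf_eq1 => /orP [] /eqP ->; [left|right]; reflexivity.
rewrite /lsym_type Edef -Hs hk2 mulrC; reflexivity.
Qed.

Lemma gen_bez (F : comRingType) (P Z Zi Q T : F) :
  Z * Zi = 1 -> P * Z * (Q * Zi * T) = Q * P * T.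
Proof. move=> h; transitivity (Q * P * T * (Z * Zi)); [ring | rewrite h mulr1; reflexivity]. Qed.

Lemma dvd_poly_laurent (R : realType) (g : {poly R[i]}) (a : laurent R) :
  g %| lpoly a -> ldvd (Laurent g 0) a.
Proof.
move=> /dvdpP [qa hqa]; exists (Laurent qa (lsh a)).
rewrite !lvalE /= hqa expr0z mulr1 rmorphM mulrA [tofrac g * _]mulrC; reflexivity.
Qed.

Lemma bezout (R : realType) (a b r : laurent R) : is_lgcd r a b ->
  exists u0 v0 : laurent R, lval a * lval u0 + lval b * lval v0 = lval r.
Proof.
move=> [_ _ hg].
have [[e1 e2] /= he] := Bezoutp (lpoly a) (lpoly b).
have hga : e1 * lpoly a + e2 * lpoly b %| lpoly a by rewrite (eqp_dvdl _ he) dvdp_gcdl.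
have hgb : e1 * lpoly a + e2 * lpoly b %| lpoly b by rewrite (eqp_dvdl _ he) dvdp_gcdr.
have [t ht] := hg _ (dvd_poly_laurent _ _ _ hga) (dvd_poly_laurent _ _ _ hgb).
exists (lmul (Laurent e1 (- lsh a)) t), (lmul (Laurent e2 (- lsh b)) t).
rewrite !lval_lmul -ht !lvalE /= expr0z mulr1.
rewrite !gen_bez ?zK // -mulrDl -!rmorphM -rmorphD; reflexivity.
Qed.

Lemma qsym (R : realType) (r x y : laurent R) er cr ey cy :
  sign er -> sign ey -> lsym_type r er cr -> lsym_type y ey cy ->
  lval r != 0 -> lval r * lval x = lval y ->
  lval_inv x = E (er * ey) * zvar R ^ (cr - cy) * lval x.
Proof.
move=> her hey Hr Hy nr h.
have hi := lval_wd _ (lmul r x) y; rewrite lval_lmul lvali_lmul in hi.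
have hi' := hi h.
have hr' := sym_inv _ _ _ _ Hr her; have hy' := sym_inv _ _ _ _ Hy hey.
rewrite zexpN in hr'; rewrite zexpN in hy'.
rewrite EM zexpD zexpN.
exact: (G_qsym _ _ _ _ _ _ _ _ _ _ _ (Esign _ _ her) (Esign _ _ hey)
          (zexp_neq0 _ _) (zexp_neq0 _ _) nr hr' hy' h hi').
Qed.

Definition tl {R : realType} (e : R[i]) (m : int) : laurent R :=
  ladd (lmon ((absz m).+1)%:Z) (lmul (lconst e) (lmon (m - ((absz m).+1)%:Z))).

Lemma t_sym (R : realType) (e : R[i]) (m : int) : sign e ->
  lval_inv (tl e m) = E e * zvar R ^ (- m) * lval (tl e m).
Proof.
move=> he; rewrite /tl lvali_ladd lval_ladd lvali_lmul lval_lmul lvali_lmon !lval_lmon.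
rewrite lvali_lconst lval_lconst lvali_lmon.
set k := ((absz m).+1)%:Z.
rewrite !(zexpD, zexpN).
exact: (G_t _ _ _ _ (Esign _ _ he) (zexp_neq0 _ _) (zexp_neq0 _ _)).
Qed.

Lemma t_neq0 (R : realType) (e : R[i]) (m : int) : lval (tl e m : laurent R) != 0.
Proof.
rewrite /tl lval_ladd lval_lmul !lval_lmon lval_lconst.
set k := ((absz m).+1)%:Z.
set j := absz ((k + k - m)%R).
have hj : (j%:Z) = k + k - m by rewrite /j /k; lia.
have hj0 : (0 < j)%N by rewrite /j /k; lia.
have -> : zvar R ^ k + E e * zvar R ^ (m - k) =
          tofrac ('X^j + e%:P) * zvar R ^ (m - k).
  rewrite tofracD tofracXn Edef mulrDl -zexpD hj.
  have -> : k + k - m + (m - k) = k by lia.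
  reflexivity.
apply: mulf_neq0; last exact: zexp_neq0.
rewrite tofrac_eq0; apply/eqP => h0.
have := congr1 (fun p : {poly R[i]} => p`_j) h0.
rewrite coefD coefXn coefC eqxx coef0.
have -> : (j == 0%N) = false by apply/eqP => hj1; rewrite hj1 in hj0.
rewrite addr0 => /eqP; rewrite oner_eq0; exact: id.
Qed.

Lemma E_neq0 (R : realType) (c : R[i]) : c != 0 -> E c != 0 :> ratfun R.
Proof.
move=> hc; apply/eqP => h; move/eqP: hc; apply.
apply: (E_inj R); rewrite h; symmetry; exact: rmorph0.
Qed.

Lemma ED (R : realType) (x y : R[i]) : E (x + y) = E x + E y :> ratfun R.
Proof. exact: rmorphD. Qed.

Lemma fixup (R : realType) (a b r u v : laurent R) ea ca eb cb er cr :
  sign ea -> sign eb -> sign er ->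
  lsym_type a ea ca -> lsym_type b eb cb -> lsym_type r er cr ->
  lval r != 0 -> lval b != 0 -> ldvd r a -> ldvd r b ->
  lval_inv v = E (er * eb) * zvar R ^ (cb - cr) * lval v ->
  lval u = 0 -> lval a * lval u + lval b * lval v = lval r ->
  exists u' v' : laurent R,
   lval_inv u' = E (er * ea) * zvar R ^ (ca - cr) * lval u' /\
   lval_inv v' = E (er * eb) * zvar R ^ (cb - cr) * lval v' /\
   lval u' != 0 /\ lval v' != 0 /\ lval a * lval u' + lval b * lval v' = lval r.
Proof.
move=> hea heb her Ha Hb Hr nr nb [aq haq] [bq hbq] Hv hu0 heq.
rewrite hu0 mulr0 add0r in heq.
have qa := qsym _ r aq a er cr ea ca her hea Hr Ha nr haq.
have qb := qsym _ r bq b er cr eb cb her heb Hr Hb nr hbq.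
have ht := t_sym R (ea * eb) (cr + cr - ca - cb) (signM _ _ _ hea heb).
have nt := t_neq0 R (ea * eb) (cr + cr - ca - cb).
have nv : lval v != 0.
  by apply/eqP => h; move: nr; rewrite -heq h mulr0 eqxx.
have nbq : lval bq != 0.
  by apply/eqP => h; move: nb; rewrite -hbq h mulr0 eqxx.
have [lam [hlam1 hlam2]] : exists lam : R[i], lam != 0 /\
    lval v + - (lval aq * (E lam * lval (tl (ea * eb) (cr + cr - ca - cb)))) != 0.
  case: (eqVneq (lval v + - (lval aq * (E 1 * lval (tl (ea * eb) (cr + cr - ca - cb))))) 0) => h.
    exists 2; split; first by rewrite pnatr_eq0.
    move/eqP: h; rewrite subr_eq0 => /eqP h.
    have -> : (2 : R[i]) = 1 + 1 by [].
    rewrite ED mulrDl mulrDr -h opprD addrA subrr add0r oppr_eq0; exact: nv.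
  by exists 1; split; [exact: oner_neq0 | exact: h].
exists (lmul bq (lmul (lconst lam) (tl (ea * eb) (cr + cr - ca - cb)))).
exists (ladd v (lopp (lmul aq (lmul (lconst lam) (tl (ea * eb) (cr + cr - ca - cb)))))).
rewrite !lval_lmul !lvali_lmul lval_ladd lvali_ladd lval_lopp lvali_lopp !lval_lmul !lvali_lmul.
rewrite lval_lconst lvali_lconst.
split.
  rewrite !EM !(zexpD, zexpN) in qb ht *.
  exact: (G_fix_u _ _ _ _ _ _ _ _ _ _ _ _ (Esign _ _ her) (Esign _ _ hea) (Esign _ _ heb)
           (zexp_neq0 _ _) (zexp_neq0 _ _) (zexp_neq0 _ _) qb ht).
split.
  rewrite !EM !(zexpD, zexpN) in qa ht Hv *.
  exact: (G_fix_v _ _ _ _ _ _ _ _ _ _ _ _ _ _ (Esign _ _ her) (Esign _ _ hea) (Esign _ _ heb)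
           (zexp_neq0 _ _) (zexp_neq0 _ _) (zexp_neq0 _ _) Hv qa ht).
split.
  apply: mulf_neq0; first exact: nbq.
  apply: mulf_neq0; [exact: E_neq0 | exact: nt].
split; first exact: hlam2.
exact: (G_fix_eq _ _ _ _ _ _ _ _ (esym haq) (esym hbq) heq).
Qed.

Lemma lval_lone (R : realType) : lval (lone R) = 1.
Proof. rewrite lvalE /= rmorph1 expr0z mulr1; reflexivity. Qed.

Lemma finish (R : realType) (a b r u v : laurent R) ea ca eb cb er cr :
  sign ea -> sign eb -> sign er ->
  lsym_type a ea ca -> lsym_type b eb cb -> lsym_type r er cr ->
  lval a != 0 -> lval b != 0 -> lval r != 0 -> ldvd r a -> ldvd r b ->
  lval_inv u = E (er * ea) * zvar R ^ (ca - cr) * lval u ->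
  lval_inv v = E (er * eb) * zvar R ^ (cb - cr) * lval v ->
  lval u != 0 -> lval v != 0 -> lval a * lval u + lval b * lval v = lval r ->
    lsym u /\ lsym v /\ lval u != 0 /\ lval v != 0 /\
    lval a * lval u + lval b * lval v = lval r /\
    Sym a * Sym u = Sym r /\ Sym b * Sym v = Sym r /\
    is_lgcd (lone R) u v.
Proof.
move=> hea heb her Ha Hb Hr na nb nr [aq haq] [bq hbq] Hu Hv nu nv heq.
have hsu := signM _ _ _ her hea; have hsv := signM _ _ _ her heb.
have Hu' : lsym_type u (er * ea) (cr - ca).
  by apply: (sym_fwd _ _ _ _ _ hsu); rewrite opprB; exact: Hu.
have Hv' : lsym_type v (er * eb) (cr - cb).
  by apply: (sym_fwd _ _ _ _ _ hsv); rewrite opprB; exact: Hv.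
split; first by exists (er * ea), (cr - ca); split; [exact: hsu | exact: Hu'].
split; first by exists (er * eb), (cr - cb); split; [exact: hsv | exact: Hv'].
split; first exact: nu.
split; first exact: nv.
split; first exact: heq.
split.
  rewrite (Sym_val _ _ _ _ Ha hea na) (Sym_val _ _ _ _ Hu' hsu nu) (Sym_val _ _ _ _ Hr her nr).
  rewrite EM !(zexpD, zexpN).
  exact: (G_S _ _ _ _ _ (Esign _ _ hea) (zexp_neq0 _ _)).
split.
  rewrite (Sym_val _ _ _ _ Hb heb nb) (Sym_val _ _ _ _ Hv' hsv nv) (Sym_val _ _ _ _ Hr her nr).
  rewrite EM !(zexpD, zexpN).
  exact: (G_S _ _ _ _ _ (Esign _ _ heb) (zexp_neq0 _ _)).
split.
- by exists u; rewrite lval_lone mul1r.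
- by exists v; rewrite lval_lone mul1r.
- move=> d [x hx] [y hy]; exists (ladd (lmul aq x) (lmul bq y)).
  rewrite lval_ladd !lval_lmul lval_lone.
  apply: (mulfI nr); rewrite mulr1 G_gcd haq hbq hx hy; exact: heq.
Qed.

Lemma half_half (R : realType) : E (2^-1) + E (2^-1) = 1 :> ratfun R.
Proof.
rewrite -ED -E1; congr E.
by rewrite -mulr2n -(mulr_natr (2^-1 : R[i]) 2) mulVf // pnatr_eq0.
Qed.

Theorem theorem3p11 (R : realType) (a b r : laurent R) :
  lval a != 0 -> lval b != 0 ->
  lsym a -> lsym b ->
  is_lgcd r a b ->
  exists u v : laurent R,
    lsym u /\ lsym v /\ lval u != 0 /\ lval v != 0 /\
    lval a * lval u + lval b * lval v = lval r /\
    Sym a * Sym u = Sym r /\ Sym b * Sym v = Sym r /\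
    is_lgcd (lone R) u v.
Proof.
move=> na nb [ea [ca [hea Ha]]] [eb [cb [heb Hb]]] hg.
have [er [cr [her Hr]]] := r_sym _ a b r ea ca eb cb Ha Hb hg na.
have [hra hrb _] := hg.
have nr := lval_dvd_neq0 _ _ _ hra na.
have [u0 [v0 e0]] := bezout _ _ _ _ hg.
have e0i : lval_inv a * lval_inv u0 + lval_inv b * lval_inv v0 = lval_inv r.
  have := lval_wd _ (ladd (lmul a u0) (lmul b v0)) r.
  rewrite lval_ladd !lval_lmul lvali_ladd !lvali_lmul; apply; exact: e0.
pose u := lmul (lconst (2^-1)) (ladd u0 (lmul (lconst (er * ea)) (lmul (lmon (cr - ca)) (lrev u0)))).
pose v := lmul (lconst (2^-1)) (ladd v0 (lmul (lconst (er * eb)) (lmul (lmon (cr - cb)) (lrev v0)))).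
have heq : lval a * lval u + lval b * lval v = lval r.
  rewrite /u /v !lval_lmul !lval_ladd !lval_lmul !lval_lconst !lval_lmon !lval_lrev.
  rewrite !EM !(zexpD, zexpN).
  have Ha' := Ha; have Hb' := Hb; have Hr' := Hr.
  rewrite /lsym_type Edef in Ha' Hb' Hr'.
  exact: (G_eq _ _ _ _ _ _ _ _ _ _ _ _ _ _ _ _ _ _
     (Esign _ _ hea) (Esign _ _ heb) (Esign _ _ her)
     (zexp_neq0 _ _) (zexp_neq0 _ _) (zexp_neq0 _ _) (half_half R) Ha' Hb' Hr' e0 e0i).
have Hu : lval_inv u = E (er * ea) * zvar R ^ (ca - cr) * lval u.
  rewrite /u !lval_lmul !lvali_lmul !lval_ladd !lvali_ladd !lval_lmul !lvali_lmul.
  rewrite !lval_lconst !lvali_lconst !lval_lmon !lvali_lmon lval_lrev lvali_lrev opprB.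
  rewrite !(zexpD, zexpN).
  exact: (G_u_sym _ _ _ _ _ _ _ (Esign _ _ (signM _ _ _ her hea)) (zexp_neq0 _ _) (zexp_neq0 _ _)).
have Hv : lval_inv v = E (er * eb) * zvar R ^ (cb - cr) * lval v.
  rewrite /v !lval_lmul !lvali_lmul !lval_ladd !lvali_ladd !lval_lmul !lvali_lmul.
  rewrite !lval_lconst !lvali_lconst !lval_lmon !lvali_lmon lval_lrev lvali_lrev opprB.
  rewrite !(zexpD, zexpN).
  exact: (G_u_sym _ _ _ _ _ _ _ (Esign _ _ (signM _ _ _ her heb)) (zexp_neq0 _ _) (zexp_neq0 _ _)).
case: (eqVneq (lval u) 0) => hu0.
  have [u' [v' [Hu' [Hv' [nu' [nv' heq']]]]]] :=
    fixup _ a b r u v ea ca eb cb er cr hea heb her Ha Hb Hr nr nb hra hrb Hv hu0 heq.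
  exists u', v'.
  exact: (finish _ a b r u' v' ea ca eb cb er cr hea heb her Ha Hb Hr na nb nr hra hrb Hu' Hv' nu' nv' heq').
case: (eqVneq (lval v) 0) => hv0.
  have heqs : lval b * lval v + lval a * lval u = lval r by rewrite addrC; exact: heq.
  have [v' [u' [Hv' [Hu' [nv' [nu' heq']]]]]] :=
    fixup _ b a r v u eb cb ea ca er cr heb hea her Hb Ha Hr nr na hrb hra Hu hv0 heqs.
  exists u', v'.
  have heq'' : lval a * lval u' + lval b * lval v' = lval r by rewrite addrC; exact: heq'.
  exact: (finish _ a b r u' v' ea ca eb cb er cr hea heb her Ha Hb Hr na nb nr hra hrb Hu' Hv' nu' nv' heq'').
exists u, v.
exact: (finish _ a b r u v ea ca eb cb er cr hea heb her Ha Hb Hr na nb nr hra hrb Hu Hv hu0 hv0 heq).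
Qed.
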